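(* Let $E$ be an approximation space having a well-orderable topological basis (in particular, any approximation space with a countable basis). Then the intersection of countably many dense $\mathbf{\Pi}^0_2(E)$ subsets of $E$ is dense in $E$.
   Context: Approximation relation: a binary relation $\ll$ on a topological basis $\mathcal{B}$ of $E$ such that for all $U,V,T\in\mathcal{B}$: (1) $U\ll V\Rightarrow V\subseteq U$; (2) $U\subseteq T$ and $U\ll V$ imply $T\ll V$; (3) for every $x\in U$ there is $W\in\mathcal{B}$ with $x\in W$ and $U\ll W$; (4) every sequence $(U_i)_{i\in\mathbb{N}}$ in $\mathcal{B}$ with $U_i\ll U_{i+1}$ for all $i$ has $\bigcap_iU_i\ne\emptyset$. An approximation space is a space admitting such a relation. Borel classes in a general topological space: $\mathbf{\Sigma}^0_2(E)$ is the family of countable unions of sets $U\setminus V$ with $U,V$ open (equivalently, countable unions of Boolean combinations of open sets); $\mathbf{\Pi}^0_2(E)$ is the family of complements of $\mathbf{\Sigma}^0_2(E)$ sets. *)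

(* Defs.v *)
From Stdlib Require Import Classical.

Definition set (E : Type) := E -> Prop.
Definition subset {E} (U V : set E) : Prop := forall x, U x -> V x.

Record topology (E : Type) := Topology {
  is_open : set E -> Prop;
  open_full : is_open (fun _ => True);
  open_union : forall F : set E -> Prop,
      (forall U, F U -> is_open U) -> is_open (fun x => exists U, F U /\ U x);
  open_inter : forall U V, is_open U -> is_open V -> is_open (fun x => U x /\ V x)
}.
Arguments is_open {E} t U.

Definition is_basis {E} (t : topology E) (B : set E -> Prop) : Prop :=
  (forall U, B U -> is_open t U) /\
  (forall U x, is_open t U -> U x -> exists V, B V /\ V x /\ subset V U).

Definition approximation_relation {E} (B : set E -> Prop)
    (ll : set E -> set E -> Prop) : Prop :=
  (forall U V, B U -> B V -> ll U V -> subset V U) /\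
  (forall U V T, B U -> B V -> B T -> subset U T -> ll U V -> ll T V) /\
  (forall U x, B U -> U x -> exists W, B W /\ W x /\ ll U W) /\
  (forall Us : nat -> set E, (forall i, B (Us i)) ->
      (forall i, ll (Us i) (Us (S i))) -> exists x, forall i, Us i x).

Definition approximation_space {E} (t : topology E) : Prop :=
  exists B ll, is_basis t B /\ approximation_relation B ll.

Definition well_orderable {E} (S : set E -> Prop) : Prop :=
  exists R : set E -> set E -> Prop,
    (forall U, S U -> ~ R U U) /\
    (forall U V W, S U -> S V -> S W -> R U V -> R V W -> R U W) /\
    (forall U V, S U -> S V -> R U V \/ U = V \/ R V U) /\
    (forall P : set E -> Prop, (forall U, P U -> S U) -> (exists U, P U) ->
        exists U, P U /\ forall V, P V -> ~ R V U).

Definition Sigma02 {E} (t : topology E) (A : set E) : Prop :=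
  exists Us Vs : nat -> set E,
    (forall n, is_open t (Us n) /\ is_open t (Vs n)) /\
    (forall x, A x <-> exists n, Us n x /\ ~ Vs n x).

Definition Pi02 {E} (t : topology E) (A : set E) : Prop :=
  exists S, Sigma02 t S /\ forall x, A x <-> ~ S x.

Definition dense {E} (t : topology E) (D : set E) : Prop :=
  forall U, is_open t U -> (exists x, U x) -> exists x, U x /\ D x.

(* Main.v *)
Require Import Defs.
From Stdlib Require Import Classical ClassicalEpsilon Cantor.

Section S.
Context {E : Type} (t : topology E) (B : set E -> Prop) (ll : set E -> set E -> Prop)
  (Hb : is_basis t B) (Ha : approximation_relation B ll) (G : nat -> set E)
  (HG : forall k W, is_open t W -> (exists x, W x) ->
        exists V, is_open t V /\ (exists x, V x) /\ subset V W /\ subset V (G k)).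

Lemma step_lem k W : B W -> (exists x, W x) ->
  exists W', B W' /\ (exists x, W' x) /\ ll W W' /\ subset W' (G k).
Proof.
  intros HW Hx. destruct Hb as [Hbo Hbb]. destruct Ha as [A1 [A2 [A3 A4]]].
  destruct (HG k W (Hbo _ HW) Hx) as [V [Vo [[z Vz] [VW VG]]]].
  destruct (Hbb V z Vo Vz) as [V' [BV' [V'z V'V]]].
  destruct (A3 V' z BV' V'z) as [W'' [BW'' [W''z ll']]].
  exists W''. repeat split; auto.
  - exists z; auto.
  - apply (A2 V' W'' W); auto. intros y Hy; auto.
  - intros y Hy. apply VG, V'V, (A1 V' W'' BV' BW'' ll'), Hy.
Qed.

Lemma step_ex k W : exists W',
  B W -> (exists x, W x) -> B W' /\ (exists x, W' x) /\ ll W W' /\ subset W' (G k).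
Proof.
  destruct (classic (B W /\ exists x, W x)) as [[h1 h2]|h].
  - destruct (step_lem k W h1 h2) as [W' HW']. exists W'; auto.
  - exists W. intros h1 h2; exfalso; auto.
Qed.

Definition stepf k W := proj1_sig (constructive_indefinite_description _ (step_ex k W)).

Lemma baire U : is_open t U -> (exists x, U x) -> exists x, U x /\ forall k, G k x.
Proof.
  intros Uo Ux. pose proof Hb as [Hbo Hbb]. pose proof Ha as [A1 [A2 [A3 A4]]].
  destruct (HG 0 U Uo Ux) as [V [Vo [[z Vz] [VU VG]]]].
  destruct (Hbb V z Vo Vz) as [W0 [BW0 [W0z W0V]]].
  set (Ws := fix f n := match n with 0 => W0 | S k => stepf (S k) (f k) end).
  assert (Hinv : forall n, B (Ws n) /\ (exists x, Ws n x) /\ subset (Ws n) (G n)).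
  { induction n as [|n [h1 [h2 h3]]].
    - simpl. repeat split; auto. exists z; auto. intros y Hy; auto.
    - simpl. unfold stepf. destruct (constructive_indefinite_description _ _) as [W' HW'].
      simpl. destruct (HW' h1 h2) as [a [b [c d]]]. auto. }
  assert (Hll : forall n, ll (Ws n) (Ws (S n))).
  { intro n. destruct (Hinv n) as [h1 [h2 _]]. simpl. unfold stepf.
    destruct (constructive_indefinite_description _ _) as [W' HW'].
    simpl. destruct (HW' h1 h2) as [a [b [c d]]]. auto. }
  destruct (A4 Ws (fun n => proj1 (Hinv n)) Hll) as [x Hx].
  exists x. split.
  - apply VU, W0V, (Hx 0).
  - intro k. destruct (Hinv k) as [_ [_ h]]. apply h, Hx.
Qed.
End S.

Theorem theorem3p13 (E : Type) (t : topology E) :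
  approximation_space t ->
  (exists B, is_basis t B /\ well_orderable B) ->
  forall A : nat -> set E,
    (forall n, Pi02 t (A n) /\ dense t (A n)) ->
    dense t (fun x => forall n, A n x).
Proof.
  intros [B [ll [Hb Ha]]] _ A HA.
  assert (Hn : forall n, exists p : (nat -> set E) * (nat -> set E),
    (forall m, is_open t (fst p m) /\ is_open t (snd p m)) /\
    (forall x, A n x <-> forall m, ~ (fst p m x /\ ~ snd p m x))).
  { intro n. destruct (HA n) as [[S [[Us [Vs [Ho Hs]]] HS]] _].
    exists (Us, Vs). simpl. split; auto. intro x. rewrite HS, Hs. split.
    - intros h m hm. apply h. exists m; auto.
    - intros h [m hm]. apply (h m hm). }
  set (UV := fun n => proj1_sig (constructive_indefinite_description _ (Hn n))).
  assert (HUV : forall n, (forall m, is_open t (fst (UV n) m) /\ is_open t (snd (UV n) m)) /\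
    (forall x, A n x <-> forall m, ~ (fst (UV n) m x /\ ~ snd (UV n) m x))).
  { intro n. unfold UV. destruct (constructive_indefinite_description _ _). auto. }
  set (G := fun k x => let '(n, m) := of_nat k in ~ (fst (UV n) m x /\ ~ snd (UV n) m x)).
  intros U Uo Ux.
  destruct (baire t B ll Hb Ha G) with (U := U) as [x [xU xG]]; auto.
  - intros k W Wo Wx. unfold G. destruct (of_nat k) as [n m].
    destruct (HUV n) as [Hop Hiff]. destruct (Hop m) as [Uop Vop].
    destruct (classic (exists y, W y /\ fst (UV n) m y)) as [[y [Wy Uy]] | hno].
    + destruct (proj2 (HA n) _ (open_inter _ t _ _ Wo Uop) (ex_intro _ y (conj Wy Uy)))
        as [x [[xW xU] xA]].
      assert (xV : snd (UV n) m x).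
      { apply NNPP; intro hv. apply (proj1 (Hiff x) xA m). auto. }
      exists (fun z => W z /\ snd (UV n) m z). repeat split.
      * apply open_inter; auto.
      * exists x; auto.
      * intros z [h _]; auto.
      * intros z [_ h] [_ h']; auto.
    + exists W. split; [exact Wo|]. split; [exact Wx|]. split; [intros w0 h0; exact h0|].
      intros w0 w0W [w0U _]. apply hno; eauto.
  - exists x. split; auto. intro n. apply (proj2 (proj2 (HUV n) x)). intro m.
    pose proof (xG (to_nat (n, m))) as h. unfold G in h. rewrite cancel_of_to in h. exact h.
Qed.
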